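(* Let $\mathcal{M}_i=(E_i,\rho_i)$, $i=1,2$, be $q$-matroids with sets of cyclic flats $\mathcal{Z}_i$, and let $\rho$ be the rank function of $\mathcal{M}_1\oplus\mathcal{M}_2$ on $E=E_1\oplus E_2$. Then for all $V\le E$, \[ \rho(V)=\min_{Z_1\in\mathcal{Z}_1,\,Z_2\in\mathcal{Z}_2}\Big(\rho(Z_1\oplus Z_2)+\dim\big((V+Z_1\oplus Z_2)/(Z_1\oplus Z_2)\big)\Big). \]
   Context: Let $\mathbb{F}=\mathbb{F}_q$. A $q$-matroid is $\mathcal{M}=(E,\rho)$, $E$ a finite-dimensional $\mathbb{F}$-vector space, $\rho$ from subspaces to $\mathbb{Z}_{\ge0}$ with $0\le\rho(V)\le\dim V$, monotone and submodular. Flat: $\rho(F+\langle x\rangle)>\rho(F)$ for all $x\notin F$. Cyclic core: $\mathrm{cyc}(V)=\{x\in V\mid\rho(W)=\rho(V)\text{ for all }W\le V\text{ with }W+\langle x\rangle=V\}$; cyclic: $\mathrm{cyc}(V)=V$; a cyclic flat is a flat that is cyclic. Direct sum: for $E=E_1\oplus E_2$ with projections $\pi_i$, $\mathcal{M}_1\oplus\mathcal{M}_2=(E,\rho)$ where $\rho(V)=\dim V+\min_{X\le V}(\rho_1(\pi_1(X))+\rho_2(\pi_2(X))-\dim X)$. *)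

(* Defs.v *)
From HB Require Import structures.
From mathcomp Require Import all_boot all_order all_algebra.
Set Implicit Arguments. Unset Strict Implicit. Unset Printing Implicit Defensive.
Import Order.TTheory GRing.Theory Num.Theory.

(* Over a finite field, the type of subspaces of a finite-dimensional space is
   finite (it is a subtype of a finite matrix type); we register this so that
   minima over subspaces can be written as big operators. *)
Section FiniteSubspaces.
Import VectorInternalTheory.
Variables (F : finFieldType) (vT : vectType F).
HB.instance Definition _ := [Finite of {vspace vT} by <:].
End FiniteSubspaces.

Local Open Scope ring_scope.

Section QMatroid.
Variables (F : finFieldType) (E : vectType F).

(* q-matroid axioms for a rank function rho : subspaces -> Z_{>=0}
   (0 <= rho V is automatic for nat values). *)
Definition is_qmatroid (rho : {vspace E} -> nat) : Prop :=
  [/\ (forall V : {vspace E}, (rho V <= \dim V)%N),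
      (forall V W : {vspace E}, (V <= W)%VS -> (rho V <= rho W)%N) &
      (forall V W : {vspace E},
          (rho (V + W)%VS + rho (V :&: W)%VS <= rho V + rho W)%N)].

Definition is_flat (rho : {vspace E} -> nat) (Fl : {vspace E}) : Prop :=
  forall x : E, x \notin Fl -> (rho Fl < rho (Fl + <[x]>)%VS)%N.

Definition in_cyc (rho : {vspace E} -> nat) (V : {vspace E}) (x : E) : Prop :=
  x \in V /\
  (forall W : {vspace E}, (W <= V)%VS -> (W + <[x]>)%VS = V -> rho W = rho V).

(* Cyclic: cyc(V) = V (cyc(V) is contained in V by definition). *)
Definition is_cyclic (rho : {vspace E} -> nat) (V : {vspace E}) : Prop :=
  forall x : E, x \in V -> in_cyc rho V x.

Definition is_cyclic_flat (rho : {vspace E} -> nat) (Z : {vspace E}) : Prop :=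
  is_flat rho Z /\ is_cyclic rho Z.

End QMatroid.

Section DirectSum.
Variables (F : finFieldType) (E1 E2 : vectType F).

Definition proj1_vs (X : {vspace E1 * E2}) : {vspace E1} :=
  (linfun (fun x : E1 * E2 => x.1) @: X)%VS.
Definition proj2_vs (X : {vspace E1 * E2}) : {vspace E2} :=
  (linfun (fun x : E1 * E2 => x.2) @: X)%VS.

Definition dsum_vs (Z1 : {vspace E1}) (Z2 : {vspace E2}) : {vspace E1 * E2} :=
  (linfun (fun x : E1 => (x, 0 : E2)) @: Z1
   + linfun (fun y : E2 => (0 : E1, y)) @: Z2)%VS.

(* The minimum is a big [Order.min] over the finite type of subspaces X <= V;
   its neutral element is the value of the term at X = 0, which is in the
   range, so the big operator is exactly the minimum. *)
Definition dsum_rank (rho1 : {vspace E1} -> nat) (rho2 : {vspace E2} -> nat)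
    (V : {vspace E1 * E2}) : int :=
  (\dim V)%:Z +
  \big[Order.min/((rho1 0%VS)%:Z + (rho2 0%VS)%:Z)]_(X : {vspace E1 * E2} | (X <= V)%VS)
     ((rho1 (proj1_vs X))%:Z + (rho2 (proj2_vs X))%:Z - (\dim X)%:Z).

End DirectSum.

(* Main.v *)
Require Import Defs.
From HB Require Import structures.
From mathcomp Require Import all_boot all_order all_algebra.
Import Order.TTheory GRing.Theory Num.Theory.
Local Open Scope ring_scope.
From mathcomp Require Import zify.


Section DS.
Variables (F : finFieldType) (E1 E2 : vectType F).

Definition inl1 (x : E1) : E1 * E2 := (x, 0).
Fact inl1_lin : linear inl1.
Proof. by move=> a x y; rewrite /inl1; apply/eqP; rewrite xpair_eqE /= scaler0 addr0 !eqxx. Qed.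
HB.instance Definition _ := GRing.isLinear.Build F E1 (E1 * E2)%type _ inl1 inl1_lin.
Lemma linfun_inl1 x : linfun (fun x : E1 => (x, 0 : E2)) x = (x, 0).
Proof. change (linfun inl1 x = inl1 x); by rewrite lfunE. Qed.
Definition inr1 (x : E2) : E1 * E2 := (0, x).
Fact inr1_lin : linear inr1.
Proof. by move=> a x y; rewrite /inr1; apply/eqP; rewrite xpair_eqE /= scaler0 addr0 !eqxx. Qed.
HB.instance Definition _ := GRing.isLinear.Build F E2 (E1 * E2)%type _ inr1 inr1_lin.
Lemma linfun_inr1 x : linfun (fun x : E2 => (0 : E1, x)) x = (0, x).
Proof. change (linfun inr1 x = inr1 x); by rewrite lfunE. Qed.
Definition fst1 (x : E1 * E2) : E1 := x.1.
Fact fst1_lin : linear fst1. Proof. by []. Qed.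
HB.instance Definition _ := GRing.isLinear.Build F (E1 * E2)%type E1 _ fst1 fst1_lin.
Lemma linfun_fst x : linfun (fun x : E1 * E2 => x.1) x = x.1.
Proof. change (linfun fst1 x = fst1 x); by rewrite lfunE. Qed.
Definition snd1 (x : E1 * E2) : E2 := x.2.
Fact snd1_lin : linear snd1. Proof. by []. Qed.
HB.instance Definition _ := GRing.isLinear.Build F (E1 * E2)%type E2 _ snd1 snd1_lin.
Lemma linfun_snd x : linfun (fun x : E1 * E2 => x.2) x = x.2.
Proof. change (linfun snd1 x = snd1 x); by rewrite lfunE. Qed.

Definition lfE := (linfun_inl1, linfun_inr1, linfun_fst, linfun_snd).

Lemma dim_img_le (E E' : vectType F) (f : 'Hom(E, E')) U : (\dim (f @: U) <= \dim U)%N.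
Proof. have := limg_ker_dim f U; lia. Qed.

Lemma proj1_dsum (Z1 : {vspace E1}) (Z2 : {vspace E2}) : proj1_vs (dsum_vs Z1 Z2) = Z1.
Proof.
apply/vspaceP => u; apply/memv_imgP/idP.
  case=> w /memv_addP [a /memv_imgP [a' Ha ->] [b /memv_imgP [b' Hb ->] ->]].
  by rewrite !lfE /= addr0 => ->.
move=> Hu; exists (u, 0); last by rewrite lfE.
apply/memv_addP; exists (u, 0); first by apply/memv_imgP; exists u; rewrite ?lfE.
by exists 0; [exact: mem0v | rewrite addr0].
Qed.

Lemma proj2_dsum (Z1 : {vspace E1}) (Z2 : {vspace E2}) : proj2_vs (dsum_vs Z1 Z2) = Z2.
Proof.
apply/vspaceP => u; apply/memv_imgP/idP.
  case=> w /memv_addP [a /memv_imgP [a' Ha ->] [b /memv_imgP [b' Hb ->] ->]].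
  by rewrite !lfE /= add0r => ->.
move=> Hu; exists (0, u); last by rewrite lfE.
apply/memv_addP; exists 0; first exact: mem0v.
by exists (0, u); [apply/memv_imgP; exists u; rewrite ?lfE | rewrite add0r].
Qed.

Lemma dim_dsum (Z1 : {vspace E1}) (Z2 : {vspace E2}) : \dim (dsum_vs Z1 Z2) = (\dim Z1 + \dim Z2)%N.
Proof.
rewrite /dsum_vs dimv_disjoint_sum.
  rewrite !limg_dim_eq //; apply/eqP; rewrite -subv0; apply/subvP => v /memv_capP [_];
  rewrite memv_ker lfE => /eqP [] ->; rewrite memv0 //.
apply/eqP; rewrite -subv0; apply/subvP => w /memv_capP [/memv_imgP [a _ ->]].
move=> /memv_imgP [b _]; rewrite !lfE => -[-> _]; exact: mem0v.
Qed.

Lemma dsumS (Z1 : {vspace E1}) (Z2 : {vspace E2}) (Y1 : {vspace E1}) (Y2 : {vspace E2}) :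
  (Z1 <= Y1)%VS -> (Z2 <= Y2)%VS -> (dsum_vs Z1 Z2 <= dsum_vs Y1 Y2)%VS.
Proof. by move=> h1 h2; apply: addvS; apply: limgS. Qed.

Lemma sub_dsum_proj (X : {vspace E1 * E2}) : (X <= dsum_vs (proj1_vs X) (proj2_vs X))%VS.
Proof.
apply/subvP => x Hx; apply/memv_addP; exists (x.1, 0).
  by apply/memv_imgP; exists x.1; rewrite ?lfE //; apply/memv_imgP; exists x; rewrite ?lfE.
exists (0, x.2); first by apply/memv_imgP; exists x.2; rewrite ?lfE //; apply/memv_imgP; exists x; rewrite ?lfE.
by case: x Hx => a b _ /=; apply/eqP; rewrite xpair_eqE /= addr0 add0r !eqxx.
Qed.
End DS.
Section R.
Variables (F : finFieldType) (E1 E2 : vectType F).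
Variables (rho1 : {vspace E1} -> nat) (rho2 : {vspace E2} -> nat).

Lemma rank_le (V X : {vspace E1 * E2}) : (X <= V)%VS ->
  dsum_rank rho1 rho2 V + (\dim X)%:Z <= (\dim V + rho1 (proj1_vs X) + rho2 (proj2_vs X))%N%:Z.
Proof.
move=> XV; rewrite /dsum_rank.
set m := \big[_/_]_(_ | _) _.
have h : m <= (rho1 (proj1_vs X))%:Z + (rho2 (proj2_vs X))%:Z - (\dim X)%:Z.
  exact: bigmin_le_cond.
rewrite !PoszD; lia.
Qed.

Lemma rank_ex (V : {vspace E1 * E2}) : exists X : {vspace E1 * E2}, (X <= V)%VS /\
  dsum_rank rho1 rho2 V + (\dim X)%:Z = (\dim V + rho1 (proj1_vs X) + rho2 (proj2_vs X))%N%:Z.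
Proof.
rewrite /dsum_rank.
set m := \big[_/_]_(_ | _) _.
suff [X [XV ->]] : exists X : {vspace E1 * E2}, (X <= V)%VS /\ m =
   (rho1 (proj1_vs X))%:Z + (rho2 (proj2_vs X))%:Z - (\dim X)%:Z.
  by exists X; split=> //; rewrite !PoszD; lia.
rewrite /m; apply: (big_ind (fun y => exists X : {vspace E1 * E2}, (X <= V)%VS /\ y =
   (rho1 (proj1_vs X))%:Z + (rho2 (proj2_vs X))%:Z - (\dim X)%:Z)).
- exists 0%VS; split; first exact: sub0v.
  by rewrite /proj1_vs /proj2_vs !limg0 dimv0 subr0.
- move=> a b [Xa [Ha ->]] [Xb [Hb ->]].
  rewrite /Order.min; case: ifP => _; [by exists Xa | by exists Xb].
- by move=> X XV; exists X.
Qed.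
End R.
Local Close Scope ring_scope.
Lemma lex_key (N a b c a' b' c' : nat) : (b < N)%N -> (b' < N)%N -> (c < N)%N -> (c' < N)%N ->
  ((a * N + b) * N + c <= (a' * N + b') * N + c')%N ->
  (a <= a')%N /\ (a = a' -> (b <= b')%N /\ (b = b' -> (c <= c')%N)).
Proof.
move=> hb hb' hc hc' h; split.
  rewrite leqNgt; apply/negP => lt.
  have h0 : (a'.+1 * N <= a * N)%N by rewrite leq_mul2r lt orbT.
  rewrite mulSn in h0.
  have h1 : ((a' * N + b').+1 * N <= (a * N) * N)%N.
    by rewrite leq_mul2r; apply/orP; right; lia.
  rewrite mulSn in h1; lia.
move=> eqa; subst a'; split.
  rewrite leqNgt; apply/negP => lt.
  have h1 : ((a * N + b').+1 * N <= (a * N + b) * N)%N.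
    by rewrite leq_mul2r; apply/orP; right; lia.
  rewrite mulSn in h1; lia.
move=> eqb; subst b'; lia.
Qed.

Section Q.
Variables (F : finFieldType) (E : vectType F) (r : {vspace E} -> nat).

Lemma exists_cf (A : {vspace E}) : is_qmatroid r ->
  exists Z, is_cyclic_flat r Z /\ (r Z + \dim (A + Z)%VS <= r A + \dim Z)%N.
Proof.
case=> rdim rmono _.
pose N := (\dim {: E}).+1.
pose f Z := (r Z + \dim (A + Z)%VS - \dim Z)%N.
pose key Z := ((f Z * N + r Z) * N + (\dim {:E} - \dim Z))%N.
pose Z := [arg min_(Z < A) key Z].
have ZP : forall Y : {vspace E}, (key Z <= key Y)%N.
  by rewrite /Z; case: arg_minnP => // Z0 _ h Y; exact: h.
have dimle (Y : {vspace E}) : (\dim Y <= \dim {:E})%N by apply: dimvS; apply: subvf.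
have rle (Y : {vspace E}) : (r Y < N)%N by apply: leq_ltn_trans (rdim Y) _; rewrite ltnS.
have cle (Y : {vspace E}) : (\dim {:E} - \dim Y < N)%N by rewrite /N ltnS leq_subr.
have cmp (Y : {vspace E}) := @lex_key N (f Z) (r Z) (\dim {:E} - \dim Z) (f Y) (r Y) (\dim {:E} - \dim Y) (rle Z) (rle Y) (cle Z) (cle Y) (ZP Y).
have dAZ (Y : {vspace E}) : (\dim Y <= \dim (A + Y)%VS)%N by apply: dimvS; apply: addvSr.
exists Z; split; last first.
  have [h _] := cmp A.
  have := dAZ Z; move: h; rewrite /f addvv. lia.
split.
  move=> x xZ; rewrite ltnNge; apply/negP => hle.
  set Y := (Z + <[x]>)%VS.
  have rY : r Y = r Z by apply/eqP; rewrite eqn_leq hle rmono // addvSl.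
  have dY : \dim Y = (\dim Z).+1.
    rewrite /Y dimv_disjoint_sum ?dim_vline.
      case: eqP => [x0|]; last by rewrite addn1.
      by move: xZ; rewrite x0 mem0v.
    apply/eqP; rewrite -subv0; apply/subvP => v /memv_capP [vZ /vlineP [k vk]].
    rewrite memv0; apply/eqP; subst v.
    have [->|k0] := eqVneq k 0%R; first by rewrite scale0r.
    have : (k^-1 *: (k *: x))%R \in Z by apply: memvZ.
    by rewrite scalerA mulVf // scale1r (negbTE xZ).
  have dAY : (\dim (A + Y)%VS <= (\dim (A + Z)%VS).+1)%N.
    rewrite /Y addvA; apply: leq_trans (dimv_add_leqif _ _) _.
    by rewrite dim_vline -addn1 leq_add2l leq_b1.
  have [h1 h2] := cmp Y.
  have fY : f Y = f Z.
    apply/eqP; rewrite eqn_leq h1 /f rY dY; have := dAZ Y; have := dAZ Z; lia.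
  have [_ h3] := h2 (esym fY).
  have := h3 (esym rY); have := dimle Y; rewrite dY; lia.
move=> x xZ; split=> // W WZ WxZ.
apply/eqP; rewrite eqn_leq rmono // leqNgt; apply/negP => lt.
have dW : (\dim Z <= (\dim W).+1)%N.
  rewrite -WxZ; apply: leq_trans (dimv_add_leqif _ _) _.
  by rewrite dim_vline -addn1 leq_add2l leq_b1.
have dAW : (\dim (A + W)%VS <= \dim (A + Z)%VS)%N by apply: dimvS; apply: addvS.
have [h1 h2] := cmp W.
have fW : f W = f Z.
  apply/eqP; rewrite eqn_leq h1 /f; have := dAZ W; have := dAZ Z; have := dimvS WZ; lia.
have [h3 _] := h2 (esym fW); lia.
Qed.
End Q.

Local Open Scope ring_scope.

Theorem corollary5p9 (F : finFieldType) (E1 E2 : vectType F)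
    (rho1 : {vspace E1} -> nat) (rho2 : {vspace E2} -> nat) :
  is_qmatroid rho1 -> is_qmatroid rho2 ->
  forall V : {vspace E1 * E2},
    (exists Z1 : {vspace E1}, exists Z2 : {vspace E2},
       [/\ is_cyclic_flat rho1 Z1, is_cyclic_flat rho2 Z2 &
        dsum_rank rho1 rho2 V =
          dsum_rank rho1 rho2 (dsum_vs Z1 Z2)
          + ((\dim (V + dsum_vs Z1 Z2)%VS)%:Z - (\dim (dsum_vs Z1 Z2))%:Z)]) /\
    (forall (Z1 : {vspace E1}) (Z2 : {vspace E2}),
       is_cyclic_flat rho1 Z1 -> is_cyclic_flat rho2 Z2 ->
       dsum_rank rho1 rho2 V <=
          dsum_rank rho1 rho2 (dsum_vs Z1 Z2)
          + ((\dim (V + dsum_vs Z1 Z2)%VS)%:Z - (\dim (dsum_vs Z1 Z2))%:Z)).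
Proof.
move=> q1 q2 V.
have [_ m1 _] := q1; have [_ m2 _] := q2.
have LB : forall Z : {vspace E1 * E2},
    dsum_rank rho1 rho2 V + (\dim Z)%:Z <= dsum_rank rho1 rho2 Z + (\dim (V + Z)%VS)%:Z.
  move=> Z; have [X [XZ eqX]] := rank_ex _ _ _ rho1 rho2 Z.
  have h := rank_le _ _ _ rho1 rho2 _ _ (capvSr X V).
  have r1le : (rho1 (proj1_vs (X :&: V)%VS) <= rho1 (proj1_vs X))%N.
    by apply: m1; apply: limgS; apply: capvSl.
  have r2le : (rho2 (proj2_vs (X :&: V)%VS) <= rho2 (proj2_vs X))%N.
    by apply: m2; apply: limgS; apply: capvSl.
  have sc := dimv_sum_cap X V.
  have dXV : (\dim (X + V)%VS <= \dim (V + Z)%VS)%N.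
    by apply: dimvS; rewrite subv_add addvSl andbT; apply: subv_trans XZ (addvSr _ _).
  move: h eqX; rewrite !PoszD; lia.
split; last first.
  move=> Z1 Z2 _ _; have := LB (dsum_vs Z1 Z2); lia.
have [X [XV eqX]] := rank_ex _ _ _ rho1 rho2 V.
set A := proj1_vs X; set B := proj2_vs X.
have [Z1 [cf1 h1]] := @exists_cf _ _ rho1 A q1.
have [Z2 [cf2 h2]] := @exists_cf _ _ rho2 B q2.
exists Z1, Z2; split => //.
set Z := dsum_vs Z1 Z2.
have hZ := rank_le _ _ _ rho1 rho2 _ _ (subvv Z).
rewrite /Z proj1_dsum proj2_dsum -/Z in hZ.
have dZ : \dim Z = (\dim Z1 + \dim Z2)%N by rewrite dim_dsum.
set W := dsum_vs (A + Z1)%VS (B + Z2)%VS.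
have XZW : (X + Z <= W)%VS.
  rewrite subv_add; apply/andP; split.
    apply: subv_trans (sub_dsum_proj _ _ _ X) _; apply: dsumS; apply: addvSl.
  by apply: dsumS; apply: addvSr.
have dW : \dim W = (\dim (A + Z1)%VS + \dim (B + Z2)%VS)%N by rewrite dim_dsum.
have d1 : (\dim (V + Z)%VS <= \dim (V + (X + Z))%VS)%N.
  by apply: dimvS; apply: addvS => //; apply: addvSr.
have sc := dimv_sum_cap V (X + Z).
have d2 : (\dim X <= \dim (V :&: (X + Z))%VS)%N.
  by apply: dimvS; rewrite subv_cap XV addvSl.
have d3 := dimvS XZW.
have := LB Z.
move: hZ eqX; rewrite !PoszD; rewrite -/A -/B; lia.
Qed.
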